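(* Let $A$ be a vector space and give $\mathrm{Sub}\,A$ the coarse open support topology. Then $\mathrm{Sub}\,A$ is a sober space, and for every $V\in\mathrm{Sub}\,A$ the complement of the closure of $\{V\}$ is $\{W\in\mathrm{Sub}\,A: V\not\subset W\}$.
   Context: $\mathrm{Sub}\,A$ is the set of linear subspaces of $A$. The coarse open support topology on $\mathrm{Sub}\,A$ is the coarsest topology in which every set $\check a=\{V\in\mathrm{Sub}\,A: a\notin V\}$, $a\in A$, is open. A space is sober if every irreducible closed set is the closure of a unique point. *)

(* Defs.v *)
From HB Require Import structures.
From mathcomp Require Import all_boot all_algebra.
From mathcomp Require Import boolp classical_sets.
Set Implicit Arguments. Unset Strict Implicit. Unset Printing Implicit Defensive.
Import GRing.Theory.
Local Open Scope classical_set_scope.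
Local Open Scope ring_scope.

Definition is_subspace (K : fieldType) (A : lmodType K) (S : set A) : Prop :=
  S 0 /\ (forall x y, S x -> S y -> S (x + y)) /\ (forall (c : K) x, S x -> S (c *: x)).

Definition Subspaces (K : fieldType) (A : lmodType K) : Type := {S : set A | is_subspace S}.

Definition is_topology (T : Type) (O : set (set T)) : Prop :=
  O setT /\ (forall U V, O U -> O V -> O (U `&` V)) /\
  (forall F : set (set T), F `<=` O -> O (\bigcup_(U in F) U)).

Definition generated_open (T : Type) (B : set (set T)) : set (set T) :=
  fun X => forall O, is_topology O -> B `<=` O -> O X.

Definition check_set (K : fieldType) (A : lmodType K) (a : A) : set (Subspaces A) :=
  [set V | ~ (proj1_sig V) a].

Definition coarse_open (K : fieldType) (A : lmodType K) : set (set (Subspaces A)) :=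
  generated_open [set U | exists a : A, U = check_set a].

Definition is_closed (T : Type) (O : set (set T)) (C : set T) : Prop := O (~` C).

Definition closure_in (T : Type) (O : set (set T)) (S : set T) : set T :=
  fun x => forall C, is_closed O C -> S `<=` C -> C x.

Definition irreducible_in (T : Type) (O : set (set T)) (C : set T) : Prop :=
  C !=set0 /\
  (forall C1 C2, is_closed O C1 -> is_closed O C2 -> C = C1 `|` C2 ->
     C = C1 \/ C = C2).

Definition sober (T : Type) (O : set (set T)) : Prop :=
  forall C, is_closed O C -> irreducible_in O C ->
    exists! x : T, C = closure_in O [set x].

(* Main.v *)
Require Import Defs.
From mathcomp Require Import all_boot all_algebra.
From mathcomp Require Import boolp classical_sets.
Local Open Scope classical_set_scope.

Set Implicit Arguments.
Section Aux.
Variables (K : fieldType) (A : lmodType K).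
Local Notation S := (Subspaces A).
Local Notation O := (@coarse_open K A).

Lemma go_top : is_topology O.
Proof.
split; [|split].
- by move=> P [? _] _.
- move=> U V HU HV P Ptop PB; have [_ [HI _]] := Ptop.
  by apply: HI; [apply: HU|apply: HV].
- move=> F HF P Ptop PB; have [_ [_ HU]] := Ptop; apply: HU => U /HF HU'.
  exact: HU' P Ptop PB.
Qed.

Lemma go_B a : O (check_set a).
Proof. by move=> P _ PB; apply: PB; exists a. Qed.

Definition Ostar : set (set S) := fun U => forall W, U W -> exists s : seq A,
  (forall a, a \in s -> ~ proj1_sig W a) /\
  (forall W' : S, (forall a, a \in s -> ~ proj1_sig W' a) -> U W').

Lemma Ostar_top : is_topology Ostar.
Proof.
split; [|split].
- by move=> W _; exists [::]; split.
- move=> U V HU HV W [/HU [s1 [h1 k1]] /HV [s2 [h2 k2]]].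
  exists (s1 ++ s2); split.
  + by move=> a; rewrite mem_cat => /orP [] ; [exact: h1 | exact: h2].
  + move=> W' hW; split; [apply: k1 | apply: k2] => a ha; apply: hW;
    by rewrite mem_cat ha ?orbT.
- move=> F HF W [U FU UW]. have [s [h k]] := HF U FU W UW.
  exists s; split => // W' hW'. exists U => //. exact: k.
Qed.

Lemma Ostar_B : [set U | exists a : A, U = check_set a] `<=` Ostar.
Proof.
move=> U [a ->] W hW; exists [:: a]; split.
  by move=> b; rewrite mem_seq1 => /eqP ->.
by move=> W' h; apply: h; rewrite mem_seq1.
Qed.

Lemma go_Ostar U : O U -> Ostar U.
Proof. move=> HU; exact: HU Ostar Ostar_top Ostar_B. Qed.

Definition D (a : A) : set S := [set W | proj1_sig W a].

Lemma D_closed a : is_closed O (D a).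
Proof.
rewrite /is_closed. have -> : ~` D a = check_set a by apply/seteqP; split.
exact: go_B.
Qed.

Lemma closedU (C1 C2 : set S) : is_closed O C1 -> is_closed O C2 -> is_closed O (C1 `|` C2).
Proof.
rewrite /is_closed setCU => h1 h2. have [_ [HI _]] := go_top. exact: HI.
Qed.

Lemma closedI (C1 C2 : set S) : is_closed O C1 -> is_closed O C2 -> is_closed O (C1 `&` C2).
Proof.
rewrite /is_closed setCI => h1 h2. have [_ [_ HU]] := go_top.
have -> : ~` C1 `|` ~` C2 = \bigcup_(U in [set X | X = ~` C1 \/ X = ~` C2]) U.
  apply/seteqP; split => W.
    by case=> h; [exists (~` C1); [left|] | exists (~` C2); [right|]].
  by move=> [U [->|->] hW]; [left|right].
by apply: HU => U [->|->].
Qed.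

Lemma closed_up (C : set S) W W' : is_closed O C -> C W ->
  proj1_sig W `<=` proj1_sig W' -> C W'.
Proof.
move=> /go_Ostar HC CW sub. apply: contrapT => nCW'.
have [s [h k]] := HC W' nCW'.
exact: (k W (fun a ha Wa => h a ha (sub a Wa)) CW).
Qed.

Lemma closure_char V W : closure_in O [set V] W <-> proj1_sig V `<=` proj1_sig W.
Proof.
split.
- move=> HW a Va. apply: (HW (D a) (D_closed a)) => X ->; exact: Va.
- move=> sub C HC VC. exact: closed_up HC (VC V erefl) sub.
Qed.

Definition Us (s : seq A) : set S := [set W | exists2 a, a \in s & proj1_sig W a].

Lemma Us_closed s : is_closed O (Us s).
Proof.
elim: s => [|a s IH].
  have -> : Us [::] = set0 by apply/seteqP; split => W // [a].
  rewrite /is_closed setC0; exact: go_top.1.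
have -> : Us (a :: s) = D a `|` Us s.
  apply/seteqP; split => W.
    by move=> [b]; rewrite inE => /orP [/eqP -> | bs] Wb; [left|right; exists b].
  by case=> [Wa|[b bs Wb]]; [exists a; rewrite ?inE ?eqxx|exists b; rewrite ?inE ?bs ?orbT].
exact: closedU (D_closed a) IH.
Qed.

Lemma irr_cover (C : set S) s : is_closed O C -> irreducible_in O C ->
  C `<=` Us s -> exists2 a, a \in s & C `<=` D a.
Proof.
move=> HC [[W0 CW0] irr]; elim: s => [|a s IH] sub.
  by case: (sub W0 CW0).
have E : C = (C `&` D a) `|` (C `&` Us s).
  apply/seteqP; split=> W.
    move=> CW; have [b] := sub W CW; rewrite inE => /orP [/eqP -> | bs] Wb;
      [left|right]; split => //; exists b => //.
  by move=> [[]|[]].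
have [e|e] := irr _ _ (closedI HC (D_closed a)) (closedI HC (Us_closed s)) E.
  exists a; first by rewrite inE eqxx.
  move=> W CW; rewrite e in CW; exact: CW.2.
have [b bs Cb] : exists2 b, b \in s & C `<=` D b.
  by apply: IH => W CW; rewrite e in CW; exact: CW.2.
by exists b => //; rewrite inE bs orbT.
Qed.

Lemma sub_eq (V W : S) : proj1_sig V `<=` proj1_sig W -> proj1_sig W `<=` proj1_sig V -> V = W.
Proof.
case: V W => [x hx] [y hy] /= h1 h2.
have e : x = y by apply/seteqP; split.
subst; congr exist; exact: Prop_irrelevance.
Qed.

End Aux.

Theorem lemma3p5 (K : fieldType) (A : lmodType K) :
  sober (@coarse_open K A) /\
  (forall V : Subspaces A,
     ~` closure_in (@coarse_open K A) [set V] =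
     [set W : Subspaces A | ~ (proj1_sig V `<=` proj1_sig W)]).
Proof.
split; last first.
  move=> V; apply/seteqP; split => W /=.
    by move=> h sub; apply: h; apply/closure_char.
  by move=> h /closure_char.
move=> C HC Hirr.
have [[W0 CW0] _] := Hirr.
pose Vs : set A := fun a => forall W : Subspaces A, C W -> proj1_sig W a.
have Vsub : is_subspace Vs.
  split; [|split].
  - by move=> W _; case: (proj2_sig W).
  - move=> x y hx hy W CW; case: (proj2_sig W) => _ [hD _]; exact: hD (hx W CW) (hy W CW).
  - move=> c x hx W CW; case: (proj2_sig W) => _ [_ hZ]; exact: hZ (hx W CW).
pose V : Subspaces A := exist _ Vs Vsub.
have CV : C V.
  apply: contrapT => nCV.
  have [s [h k]] := go_Ostar HC V nCV.
  have cov : C `<=` Us s.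
    move=> W CW; apply: contrapT => nU.
    exact: (k W (fun a ha Wa => nU (ex_intro2 _ _ a ha Wa)) CW).
  have [b bs Cb] := irr_cover HC Hirr cov.
  exact: h b bs (fun W CW => Cb W CW).
have EC : C = closure_in (@coarse_open K A) [set V].
  apply/seteqP; split => W.
    by move=> CW; apply/closure_char => a Va; exact: Va W CW.
  by move/closure_char => sub; exact: closed_up HC CV sub.
exists V; split => // y Ey.
have Vy : closure_in (@coarse_open K A) [set y] V by rewrite -Ey.
have yV : closure_in (@coarse_open K A) [set V] y by rewrite -EC Ey; apply/closure_char.
by apply: sub_eq; apply/closure_char.
Qed.
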